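(* Assume the standing hypotheses described in the context. Take $\theta\ge0$, $0\le t\le\lambda$, and $x_*,x,y\in\mathbb X$. If $\lambda<R$, $\|x-x_0\|\le t$, $\|x_*-x\|\le\lambda-t$, $F(x_* )=0$ and \[\|F'(x_0)^{-1}[F(x)+F'(x)(y-x)]\|\le\theta\|F'(x_0)^{-1}F(x)\|,\] then \[\|x_*-y\|\le\Big[\frac{1+\theta}{2}+\frac{2\theta}{\kappa}\Big]\|x_*-x\|,\] \[\|x_*-y\|\le\Big[\frac{1+\theta}{2}\frac{D^-f'(\lambda)}{|f'(\lambda)|}\|x_*-x\|+\theta\,\frac{2+f'(\lambda)}{|f'(\lambda)|}\Big]\|x_*-x\|.\]
   Context: Standing hypotheses: $\mathbb X,\mathbb Y$ are Banach spaces; $B(x,r)$ is the open ball. $R\in\mathbb R$, $C\subseteq\mathbb X$, $F:C\to\mathbb Y$ is continuous and continuously differentiable on $\mathrm{int}(C)$, $x_0\in\mathrm{int}(C)$ with $F'(x_0)$ non-singular, $f:[0,R)\to\mathbb R$ is continuously differentiable, $B(x_0,R)\subseteq C$, $\|F'(x_0)^{-1}[F'(y)-F'(x)]\|\le f'(\|y-x\|+\|x-x_0\|)-f'(\|x-x_0\|)$ for all $x,y\in B(x_0,R)$ with $\|x-x_0\|+\|y-x\|<R$, $\|F'(x_0)^{-1}F(x_0)\|\le f(0)$, and (h1) $f(0)>0$, $f'(0)=-1$; (h2) $f'$ is strictly increasing and convex; (h3) $f(t)<0$ for some $t\in(0,R)$. Notation: $\kappa:=\sup_{0<t<R}\frac{-f(t)}{t}$,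 $\lambda:=\sup\{t\in[0,R):\kappa+f'(t)<0\}$; $D^-f'(\lambda)$ is the left derivative of $f'$ at $\lambda$. *)

(* Defs.v *)
From HB Require Import structures.
From mathcomp Require Import all_boot all_order all_algebra.
From mathcomp Require Import all_classical all_reals all_analysis.
Set Implicit Arguments. Unset Strict Implicit. Unset Printing Implicit Defensive.
Import Order.TTheory GRing.Theory Num.Theory.
Import numFieldNormedType.Exports.
Local Open Scope classical_set_scope.
Local Open Scope ring_scope.

Definition is_derivative_on {R : realType} (f df : R -> R) (rad : R) : Prop :=
  forall t, 0 <= t < rad ->
    (fun s => (f s - f t) / (s - t)) @ within (fun s => 0 <= s < rad) t^'
      --> df t.

Definition kappa {R : realType} (f : R -> R) (rad : R) : R :=
  sup [set - f t / t | t in [set t | 0 < t < rad]].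

Definition lambda {R : realType} (f df : R -> R) (rad : R) : R :=
  sup [set t | 0 <= t < rad /\ kappa f rad + df t < 0].

Definition left_deriv {R : realType} (g : R -> R) (l : R) : R :=
  lim ((fun s => (g s - g l) / (s - l)) @ l^'-).

(* Main.v *)
Require Import Defs.
From HB Require Import structures.
From mathcomp Require Import all_boot all_order all_algebra.
From mathcomp Require Import all_classical all_reals all_analysis.
From mathcomp Require Import ring lra.
Import Order.TTheory GRing.Theory Num.Theory.
Import numFieldNormedType.Exports.
Local Open Scope classical_set_scope.
Local Open Scope ring_scope.

Section BI.
Variables (R : realType) (X Y : completeNormedModType R).
Variables (T : X -> Y) (S : Y -> X).
Hypothesis TD : forall a b, T (a + b) = T a + T b.
Hypothesis TZ : forall (k : R) a, T (k *: a) = k *: T a.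
Hypothesis Tc : continuous T.
Hypothesis TS : cancel S T.
Hypothesis ST : cancel T S.

Lemma bi_step1 : exists n : nat, exists y0 : Y, exists2 r : R, 0 < r &
  forall w, `|y0 - w| < r -> forall e : R, 0 < e ->
    exists v, `|v| <= n%:R /\ `|T v - w| < e.
Proof.
pose G n := [set w : Y | exists2 e : R, 0 < e &
   forall v, `|v| <= n%:R -> e <= `|T v - w|].
have Gopen n : open (G n).
  rewrite openE => w [e e0 He]; rewrite /interior.
  apply/nbhs_ballP; exists (e / 2); first by rewrite /= divr_gt0.
  move=> z; rewrite -ball_normE /= => wz; exists (e / 2); first by rewrite divr_gt0.
  move=> v /He ev.
  have H := ler_distD z (T v) w.
  have : e <= `|T v - z| + e / 2.
    apply: le_trans ev (le_trans H _); rewrite lerD2l ltW // distrC //.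
  by move=> H2; rewrite {1}(splitr e) in H2; rewrite -(lerD2r (e/2)).
have [n Hn] : exists n, ~ dense (G n).
  apply/existsNP => Hd.
  have /(_ setT) : dense (\bigcap_i G i) by apply: Baire => i; split.
  case.
  - by exists 0.
  - exact: openT.
  move=> w [_ Hw].
  have [e e0 He] := Hw (Num.trunc `|S w|).+1 I.
  have : e <= `|T (S w) - w| by apply: He; apply: ltW; rewrite -truncn_le_nat.
  by rewrite TS subrr normr0 leNgt e0.
move: Hn; rewrite /dense; move=> /existsNP [U /not_implyP [[y0 Oy0] /not_implyP [oO HO]]].
have : nbhs y0 U by move: oO; rewrite openE => /(_ _ Oy0).
move=> /nbhs_ballP [r r0 Hr].
exists n, y0, r => // w wr e e0.
have Ow : U w by apply: Hr; rewrite -ball_normE.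
apply: contrapT => Hne; apply: HO; exists w; split => //.
exists e => // v vn; rewrite leNgt; apply/negP => ve; apply: Hne; by exists v.
Qed.

Lemma TN a : T (- a) = - T a.
Proof. by rewrite -scaleN1r TZ scaleN1r. Qed.
Lemma TB a b : T (a - b) = T a - T b.
Proof. by rewrite TD TN. Qed.
Lemma T0 : T 0 = 0.
Proof. by rewrite -(subrr 0) TB subrr. Qed.

Lemma zz (V : zmodType) (p y q s : V) : (p - (y + q)) - (s - y) = (p - s) - q.
Proof. by rewrite opprD opprB !addrA (addrAC (p - y) (-q)) subrK addrAC. Qed.

Lemma bi_step2 : exists2 c : R, 0 < c & forall w (e : R), 0 < e ->
  exists v, `|v| <= c * `|w| /\ `|T v - w| < e.
Proof.
have [n [y0 [r r0 Hr]]] := bi_step1.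
exists ((2 * n%:R + 1) * 2 / r); first by rewrite !mulr_gt0 ?invr_gt0 // ltr_pwDr.
move=> w e e0.
have [->|wn0] := eqVneq w 0.
  by exists 0; rewrite T0 subrr !normr0 mulr0 lexx.
have m0 : 0 < `|w| by rewrite normr_gt0.
pose a := r / (2 * `|w|).
have a0 : 0 < a by rewrite divr_gt0 // mulr_gt0.
have aw : `|a *: w| < r.
  rewrite normrZ gtr0_norm //.
  have -> : a * `|w| = r / 2 by rewrite /a; field; rewrite gt_eqF.
  lra.
have ae0 : 0 < a * e / 2 by rewrite divr_gt0 // mulr_gt0.
have h1 : `|y0 - (y0 + a *: w)| < r by rewrite opprD addrA subrr sub0r normrN.
have h2 : `|y0 - y0| < r by rewrite subrr normr0.
have [v1 [v1n Hv1]] := Hr (y0 + a *: w) h1 _ ae0.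
have [v2 [v2n Hv2]] := Hr y0 h2 _ ae0.
exists (a^-1 *: (v1 - v2)); split.
  rewrite normrZ gtr0_norm ?invr_gt0 //.
  have : `|v1 - v2| <= 2 * n%:R.
    by apply: le_trans (ler_normB _ _) _; rewrite mulr2n mulrDl mul1r lerD.
  move=> H; apply: le_trans (ler_wpM2l _ H) _; first by rewrite ltW ?invr_gt0.
  have -> : a^-1 * (2 * n%:R) = (2 * n%:R) * 2 / r * `|w|.
    by rewrite /a; field; rewrite !gt_eqF.
  apply: ler_wpM2r => //; apply: ler_wpM2r; first by rewrite invr_ge0 ltW.
  apply: ler_wpM2r => //; lra.
rewrite TZ TB.
have -> : a^-1 *: (T v1 - T v2) - w = a^-1 *: ((T v1 - (y0 + a *: w)) - (T v2 - y0)).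
  by rewrite zz [RHS]scalerBr scalerA mulVf ?gt_eqF // scale1r.
rewrite normrZ gtr0_norm ?invr_gt0 //.
apply: (@lt_le_trans _ _ (a^-1 * (a * e / 2 + a * e / 2))).
  rewrite ltr_pM2l ?invr_gt0 //.
  by apply: le_lt_trans (ler_normB _ _) _; rewrite ltrD.
by rewrite -splitr mulrA mulVf ?gt_eqF // mul1r.
Qed.

Lemma bounded_inverse : exists2 c : R, 0 < c & forall w, `|S w| <= c * `|w|.
Proof.
have [c c0 Hc] := bi_step2.
exists (2 * c); first by rewrite mulr_gt0.
move=> w.
have [->|wn0] := eqVneq w 0.
  have -> : S 0 = 0 by rewrite -T0 ST.
  by rewrite !normr0 mulr0.
have m0 : 0 < `|w| by rewrite normr_gt0.
set m := `|w|.
have hz : `|(2^-1 : R)| < 1 by rewrite gtr0_norm ?invr_gt0 // invf_lt1 // ltr1n.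
have Hg : forall p : Y * nat, exists v, `|v| <= c * `|p.1| /\ `|T v - p.1| < m * (2^-1) ^+ p.2.+1.
  move=> [w' k] /=; apply: Hc; rewrite mulr_gt0 // exprn_gt0 // invr_gt0 //.
have [g Pg] := choice Hg.
pose fix ws k := if k is k'.+1 then ws k' - T (g (ws k', k')) else w.
pose vs k := g (ws k, k).
have wsb k : `|ws k| <= m * (2^-1) ^+ k.
  case: k => [|k]; first by rewrite expr0 mulr1.
  have [_ /ltW] := Pg (ws k, k); rewrite /= -normrN opprB //.
have vsb k : `|vs k| <= c * m * (2^-1) ^+ k.
  have [H _] := Pg (ws k, k); apply: le_trans H _.
  by rewrite /= -mulrA; apply: ler_wpM2l; [exact: ltW | exact: wsb].
have Tser k : T (series vs k) = w - ws k.
  elim: k => [|k IH]; first by rewrite seriesEnat /= big_geq // T0 subrr.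
  by rewrite seriesSr TD IH /= /vs opprB addrA addrAC.
have cvn : cvgn [normed series vs].
  apply: (@series_le_cvg _ _ (geometric (c * m) (2^-1))).
  - by move=> n; rewrite normr_ge0.
  - by move=> n; rewrite /= mulr_ge0 // ?exprn_ge0 ?mulr_ge0 ?ltW ?invr_gt0.
  - by move=> n; apply: vsb.
  - exact: is_cvg_geometric_series.
have cv := normed_cvg cvn.
set v := limn (series vs).
have Tv : T v = w.
  have h1 : (fun k => w - ws k) @ \oo --> T v.
    have -> : (fun k => w - ws k) = T \o series vs by apply: funext => k; rewrite /= Tser.
    by apply: cvg_comp cv _; apply: Tc.
  have h2 : (fun k => w - ws k) @ \oo --> w.
    rewrite -[X in _ --> X]subr0; apply: cvgB; first exact: cvg_cst.
    apply/norm_cvg0P; apply: (@squeeze_cvgr _ _ _ _ (fun=> 0) (geometric m (2^-1))).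
    - by near=> k; rewrite normr_ge0 /= wsb.
    - exact: cvg_cst.
    - exact: cvg_geometric.
  exact: (cvg_unique _ h1 h2).
have <- : v = S w by rewrite -Tv ST.
apply: le_trans (lim_series_norm cvn) _.
have := lim_series_le cvn (is_cvg_geometric_series (a := c * m) hz) vsb.
move/le_trans; apply.
rewrite (cvg_lim _ (cvg_geometric_series hz)) //.
have -> : 1 - 2^-1 = 2^-1 :> R by field.
by rewrite invrK mulrC mulrA.
Unshelve. all: by end_near.
Qed.
End BI.

Section RI.
Variable R : realType.

Lemma real_ind (P : R -> Prop) (a b : R) : a <= b -> P a ->
  (forall s, a < s <= b -> (forall x, a <= x < s -> P x) -> P s) ->
  (forall s, a <= s < b -> P s -> exists2 d : R, 0 < d & forall x, s < x < s + d -> P x) ->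
  forall s, a <= s <= b -> P s.
Proof.
move=> ab Pa Hcl Hst.
pose A := [set s | a <= s <= b /\ forall x, a <= x <= s -> P x].
have Aa : A a.
  split; first by rewrite lexx ab.
  by move=> x xa; have -> : x = a by apply/eqP; rewrite eq_le andbC.
have hA : has_sup A.
  split; first by exists a.
  by exists b => s [/andP[]].
set m := sup A.
have am : a <= m by apply: sup_upper_bound.
have mb : m <= b by apply: ge_sup; [exists a | move=> s [/andP[]]].
have Pbelow : forall x, a <= x < m -> P x.
  move=> x /andP[ax xm].
  have [s As xs] := sup_adherent (ltac:(by rewrite subr_gt0) : 0 < m - x) hA.
  rewrite /m in xm *; move: xs; rewrite opprB addrC subrK => xs.
  by case: As => _; apply; rewrite ax ltW.
have Pm : P m.
  have [<-|am'] := eqVneq a m; first exact: Pa.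
  apply: Hcl => //; by rewrite lt_neqAle am' am mb.
have Am : A m.
  split; first by rewrite am mb.
  move=> x /andP[ax]; rewrite le_eqVlt => /orP[/eqP ->//|xm].
  by apply: Pbelow; rewrite ax.
have mb' : m = b.
  apply/eqP; rewrite eq_le mb /=; rewrite leNgt; apply/negP => mlb.
  have [d d0 Hd] := Hst m ltac:(by rewrite am mlb) Pm.
  pose s' := Num.min (m + d / 2) b.
  have ms' : m < s'.
    by rewrite /s' lt_min mlb andbT ltrDl divr_gt0.
  have As' : A s'.
    split.
      rewrite /s' le_min ge_min lexx orbT !andbT.
      by rewrite (le_trans am) // ltW // ltrDl divr_gt0.
    move=> x /andP[ax xs']; have [xm|mx] := leP x m.
      by case: Am => _; apply; rewrite ax.
    apply: Hd; rewrite mx /=; apply: le_lt_trans xs' _.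
    rewrite /s' gt_min; apply/orP; left; lra.
  have := sup_upper_bound hA As'; rewrite -/m leNgt ms' //.
move=> s /andP[as' sb].
by case: Am => _; apply; rewrite as' mb'.
Qed.

Lemma dstep {V : normedModType R} (p q D : V) (h : R) :
  `|p - q| <= `|p - q - h *: D| + `|h| * `|D|.
Proof. by have := ler_normD (p - q - h *: D) (h *: D); rewrite subrK normrZ. Qed.

Lemma mvi (V : normedModType R) (phi D : R -> V) (K : R) : 0 <= K ->
  (forall t, 0 <= t <= 1 -> `|D t| <= K * t) ->
  (forall t, 0 <= t <= 1 -> forall e : R, 0 < e -> exists2 d : R, 0 < d &
     forall s, 0 <= s <= 1 -> `|s - t| < d ->
       `|phi s - phi t - (s - t) *: D t| <= e * `|s - t|) ->
  `|phi 1 - phi 0| <= K / 2.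
Proof.
move=> K0 HD Hd; apply/ler_addgt0Pr => eps eps0.
pose P s := `|phi s - phi 0| <= K * s ^+ 2 / 2 + eps * s.
suff : P 1 by rewrite /P expr1n !mulr1.
apply: (@real_ind P 0 1 ler01); last by rewrite lexx ler01.
- by rewrite /P subrr normr0 expr0n /= mulr0 mul0r mulr0 addr0.
- move=> s /andP[s0 s1] Pb.
  have s01 : 0 <= s <= 1 by rewrite ltW.
  have [d d0 Hs] := Hd s s01 1 ltr01.
  rewrite /P; apply/ler_addgt0Pr => eta eta0.
  pose c := `|D s| + 1.
  have c0 : 0 < c by rewrite /c ltr_pwDr // normr_ge0.
  pose del := Num.min s (Num.min d (eta / c)).
  have del0 : 0 < del by rewrite /del !lt_min s0 d0 divr_gt0.
  have dels : del <= s by rewrite /del ge_min lexx.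
  have deld : del <= d by rewrite /del !ge_min lexx orbT.
  have dele : del <= eta / c by rewrite /del !ge_min lexx !orbT.
  pose sg := s - del / 2.
  have sg0 : 0 <= sg by rewrite /sg; lra.
  have sgs : sg < s by rewrite /sg; lra.
  have Psg := Pb sg ltac:(by rewrite sg0 sgs).
  have hs : `|sg - s| = del / 2 by rewrite /sg addrAC subrr sub0r normrN gtr0_norm // divr_gt0.
  have H1 := Hs sg ltac:(by rewrite sg0 ltW // (lt_le_trans sgs)) ltac:(by rewrite hs; lra).
  have H2 := dstep (phi sg) (phi s) (D s) (sg - s).
  have H3 : `|phi s - phi sg| <= c * (del / 2).
    rewrite distrC; apply: le_trans H2 _; rewrite hs /c; rewrite hs in H1; nra.
  have H4 := ler_distD (phi sg) (phi s) (phi 0).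
  have H5 : c * (del / 2) <= eta.
    have : c * del <= eta by rewrite -ler_pdivlMl // mulrC.
    have : 0 <= c * del by rewrite mulr_ge0 // ltW.
    lra.
  have H6 : K * sg ^+ 2 / 2 + eps * sg <= K * s ^+ 2 / 2 + eps * s.
    have : sg ^+ 2 <= s ^+ 2 by rewrite ler_pXn2r // ?nnegrE // ltW.
    have : eps * sg <= eps * s by rewrite ler_pM2l // ltW.
    nra.
  rewrite /P in Psg; lra.
- move=> s /andP[s0 s1] Ps.
  have s01 : 0 <= s <= 1 by rewrite s0 ltW.
  have [d d0 Hs] := Hd s s01 eps eps0.
  pose dd := Num.min d (1 - s).
  have dd0 : 0 < dd by rewrite /dd lt_min d0 subr_gt0.
  exists dd => //.
  have dd1 : dd <= d by rewrite /dd ge_min lexx.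
  have dd2 : dd <= 1 - s by rewrite /dd ge_min lexx orbT.
  move=> x /andP[sx xsd].
  have x01 : 0 <= x <= 1 by apply/andP; split; lra.
  have hx : `|x - s| = x - s by rewrite gtr0_norm // subr_gt0.
  have H1 := Hs x x01 ltac:(rewrite hx; lra).
  have H2 := dstep (phi x) (phi s) (D s) (x - s).
  have H3 := ler_distD (phi s) (phi x) (phi 0).
  have H4 := HD s s01.
  rewrite hx in H1 H2.
  have H5 : (x - s) * `|D s| <= (x - s) * (K * s) by rewrite ler_pM2l // subr_gt0.
  rewrite /P; rewrite /P in Ps.
  have : 0 <= K * (x - s) ^+ 2 by rewrite mulr_ge0 // sqr_ge0.
  nra.
Qed.
End RI.

Section SC.
Variable R : realType.
Variables (f df : R -> R) (rad : R).
Hypothesis Hderiv : is_derivative_on f df rad.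
Hypothesis Hdf0 : df 0 = -1.
Hypothesis Hmono : {in `[0, rad[ &, {mono df : s t / s < t}}.

Lemma near_within_dev (D : set R) (t : R) (P : R -> Prop) :
  (\forall s \near within D t^', P s) ->
  exists2 d : R, 0 < d & forall s, `|t - s| < d -> s != t -> D s -> P s.
Proof.
rewrite /within /= => /nbhs_ballP [d d0 Hd].
exists d => // s ts st Ds.
Qed.

Lemma deriv_dev t : 0 <= t < rad -> forall e : R, 0 < e -> exists2 d : R, 0 < d &
  forall s, `|t - s| < d -> s != t -> 0 <= s < rad ->
    `|df t - (f s - f t) / (s - t)| < e.
Proof.
move=> tr e e0; have := Hderiv t tr; move/cvgrPdist_lt => /(_ e e0).
by move/near_within_dev.
Qed.

Lemma df_le a b : 0 <= a -> a <= b -> b < rad -> df a <= df b.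
Proof.
move=> a0 ab br; have [->//|] := eqVneq a b; move=> nab.
have ab' : a < b by rewrite lt_neqAle nab ab.
apply: ltW; rewrite Hmono // in_itv /= ?a0 ?(le_lt_trans ab br) //.
by rewrite (le_trans a0 ab).
Qed.

Lemma df_ge1 a : 0 <= a < rad -> -1 <= df a.
Proof. by case/andP => a0 ar; rewrite -Hdf0; apply: df_le. Qed.

Lemma f_lb t : 0 <= t < rad -> f 0 - t <= f t.
Proof.
case/andP=> t0 tr.
apply/ler_addgt0Pr => e e0.
pose eps := e / (t + 1).
have t1 : 0 < t + 1 by lra.
have eps0 : 0 < eps by rewrite divr_gt0.
have epst : eps * (t + 1) = e by rewrite /eps divfK // gt_eqF.
pose P s := f 0 - s - eps * s <= f s.
suff : P t by rewrite /P; nra.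
apply: (@real_ind _ P 0 t t0); last by rewrite lexx t0.
- by rewrite /P; lra.
- move=> s /andP[s0 st] Pb.
  have sr : 0 <= s < rad by rewrite ltW // (le_lt_trans st tr).
  have [d d0 Hs] := deriv_dev s sr 1 ltr01.
  rewrite /P; apply/ler_addgt0Pr => eta eta0.
  pose c := `|df s| + 1.
  have c0 : 0 < c by rewrite /c ltr_pwDr // normr_ge0.
  pose del := Num.min s (Num.min d (eta / c)).
  have del0 : 0 < del by rewrite /del !lt_min s0 d0 divr_gt0.
  have dels : del <= s by rewrite /del ge_min lexx.
  have deld : del <= d by rewrite /del !ge_min lexx orbT.
  have dele : del <= eta / c by rewrite /del !ge_min lexx !orbT.
  have H5 : c * del <= eta by rewrite -ler_pdivlMl // mulrC.
  pose sg := s - del / 2.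
  have sg0 : 0 <= sg by rewrite /sg; lra.
  have sgs : sg < s by rewrite /sg; lra.
  have Psg := Pb sg ltac:(by rewrite sg0 sgs).
  have hs : `|s - sg| = del / 2 by rewrite /sg opprB addrC subrK gtr0_norm // divr_gt0.
  have H1 := Hs sg ltac:(by rewrite hs; lra) ltac:(by rewrite lt_eqF) ltac:(by rewrite sg0 (lt_trans sgs)// (le_lt_trans st tr)).
  set q := (f sg - f s) / (sg - s) in H1.
  have hq : f sg - f s = q * (sg - s) by rewrite /q divfK // subr_eq0 lt_eqF.
  have Hq : `|q| <= c.
    have := ler_distD (df s) q 0; rewrite !subr0 distrC => H.
    rewrite /c; apply: le_trans H _; rewrite addrC lerD2l ltW //.
  have Hq2 : q * (sg - s) <= c * (del / 2).
    have : sg - s = - (del / 2) by rewrite /sg; lra.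
    move=> ->; rewrite mulrN -mulNr ler_pM2r ?divr_gt0 //.
    by apply: le_trans Hq; rewrite -normrN ler_norm.
  rewrite /P in Psg; nra.
- move=> s /andP[s0 st] Ps.
  have sr : 0 <= s < rad by rewrite s0 (lt_trans st tr).
  have [d d0 Hs] := deriv_dev s sr eps eps0.
  pose dd := Num.min d (t - s).
  have dd0 : 0 < dd by rewrite /dd lt_min d0 subr_gt0.
  exists dd => //.
  have dd1 : dd <= d by rewrite /dd ge_min lexx.
  have dd2 : dd <= t - s by rewrite /dd ge_min lexx orbT.
  move=> x /andP[sx xsd].
  have hx : `|s - x| < d by rewrite distrC gtr0_norm ?subr_gt0 //; lra.
  have xr : 0 <= x < rad by apply/andP; split; lra.
  have H1 := Hs x hx ltac:(by rewrite gt_eqF) xr.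
  set q := (f x - f s) / (x - s) in H1.
  have hq : f x - f s = q * (x - s) by rewrite /q divfK // subr_eq0 gt_eqF.
  have Hq : df s - eps <= q.
    move: H1; rewrite ltr_distl => /andP[_ H1]; lra.
  have := df_ge1 s sr => H2.
  rewrite /P; rewrite /P in Ps.
  have : (-1 - eps) * (x - s) <= q * (x - s) by rewrite ler_pM2r ?subr_gt0 //; lra.
  nra.
Qed.


Hypothesis Hf0 : 0 < f 0.
Hypothesis Hh3 : exists t, 0 < t < rad /\ f t < 0.
Hypothesis Hdfc : {within `[0, rad[, continuous df}.

Lemma dfc_int x : 0 < x < rad -> {for x, continuous df}.
Proof.
case/andP => x0 xr.
pose b := (x + rad) / 2.
have b0 : 0 < b by rewrite /b; lra.
have : {within `[0, b], continuous df}.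
  apply: continuous_subspaceW Hdfc => y /=; rewrite !in_itv /= => /andP[-> yb] /=.
  rewrite /b in yb; lra.
case/(continuous_within_itvP _ b0) => H _ _; apply: H.
by rewrite in_itv /= x0 /b; lra.
Qed.

Let KS := [set - f t / t | t in [set t | 0 < t < rad]].

Lemma kappa_hs : has_sup KS.
Proof.
split.
  by case: Hh3 => t [tr _]; exists (- f t / t); exists t.
exists 1 => _ [t /andP[t0 tr] <-].
rewrite ler_pdivrMr // mul1r.
  have := f_lb t ltac:(by rewrite ltW // tr) => H. have := Hf0. lra.
Qed.

Lemma kappa_gt0 : 0 < kappa f rad.
Proof.
case: Hh3 => t [/andP[t0 tr] ft].
apply: (@lt_le_trans _ _ (- f t / t)); first by rewrite divr_gt0 // oppr_gt0.
by apply: sup_upper_bound; [exact: kappa_hs | exists t => //=; rewrite t0 tr].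
Qed.

Lemma kappa_le1 : kappa f rad <= 1.
Proof.
apply: ge_sup; first by case: kappa_hs.
move=> _ [t /andP[t0 tr] <-].
rewrite ler_pdivrMr // mul1r.
have := f_lb t ltac:(by rewrite ltW // tr); have := Hf0; lra.
Qed.

Let LS := [set t | 0 <= t < rad /\ kappa f rad + df t < 0].

Lemma lambda_facts : lambda f df rad < rad ->
  0 <= lambda f df rad /\ df (lambda f df rad) <= - kappa f rad.
Proof.
move=> Hlr.
have [[t0 Lt0]|HL] := pselect (exists t, LS t); last first.
  have -> : lambda f df rad = 0.
    rewrite /lambda -/LS.
    have -> : LS = set0 by apply/seteqP; split => x //= Lx; apply: HL; exists x.
    exact: sup0.
  by rewrite lexx Hdf0 lerN2 kappa_le1.
have lamE : lambda f df rad = sup LS by [].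
have hs : has_sup LS by split; [exists t0 | exists rad => t [/andP[_ /ltW]]].
have lam0 : 0 <= lambda f df rad.
  have [/andP[t00 _] _] := Lt0; apply: le_trans t00 _.
  by rewrite lamE; apply: (sup_upper_bound hs).
split => //.
have [l0|lpos] := eqVneq (lambda f df rad) 0.
  have : t0 <= lambda f df rad by rewrite lamE; apply: (sup_upper_bound hs).
  case: Lt0 => /andP[t00 _] Ht; rewrite l0 => t0l.
  have t0z : t0 = 0 by apply/eqP; rewrite eq_le t0l t00.
  rewrite t0z in Ht.
  lra.
have lp : 0 < lambda f df rad by rewrite lt_neqAle eq_sym lpos lam0.
rewrite leNgt; apply/negP => Hc.
have e0 : 0 < df (lambda f df rad) + kappa f rad by lra.
have := dfc_int (lambda f df rad) ltac:(by rewrite lp Hlr).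
move/cvgrPdist_lt => /(_ _ e0) /nbhs_ballP [d d0 Hd].
have [t Lt tl] := sup_adherent d0 hs.
have tle : t <= lambda f df rad by rewrite lamE; apply: (sup_upper_bound hs).
have : `|df (lambda f df rad) - df t| < df (lambda f df rad) + kappa f rad.
  apply: Hd; rewrite -ball_normE /= ger0_norm ?subr_ge0 //.
  by rewrite lamE; lra.
case: Lt => _ Ht; rewrite ltr_distl; lra.
Qed.

Hypothesis Hconv : forall s t a : R, 0 <= s < rad -> 0 <= t < rad -> 0 <= a <= 1 ->
     df (a * s + (1 - a) * t) <= a * df s + (1 - a) * df t.

Lemma conv3 a b c : 0 <= a -> a < b -> b < c -> c < rad ->
  df b * (c - a) <= df a * (c - b) + df c * (b - a).
Proof.
move=> a0 ab bc cr.
have ca : 0 < c - a by lra.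
pose al := (c - b) / (c - a).
have hb : al * a + (1 - al) * c = b by rewrite /al; field; rewrite gt_eqF.
have h1 : al * (c - a) = c - b by rewrite /al divfK // gt_eqF.
have h2 : (1 - al) * (c - a) = b - a by rewrite mulrBl mul1r h1; lra.
have al01 : 0 <= al <= 1.
  by apply/andP; split; [rewrite /al divr_ge0 //; lra | rewrite /al ler_pdivrMr //; lra].
have := Hconv a c al ltac:(rewrite a0; lra) ltac:(apply/andP; split; lra) al01.
rewrite hb => H.
have H2 : df b * (c - a) <= (al * df a + (1 - al) * df c) * (c - a) by rewrite ler_pM2r.
have -> : df a * (c - b) + df c * (b - a) = (al * df a + (1 - al) * df c) * (c - a).
  by rewrite -h1 -h2; ring.
exact: H2.
Qed.

Lemma frac_le (x y p q : R) : 0 < p -> 0 < q -> x * q <= y * p -> x / p <= y / q.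
Proof. by move=> p0 q0 H; rewrite ler_pdivrMr // mulrAC ler_pdivlMr. Qed.

Section LD.
Variable L : R.
Hypothesis L0 : 0 < L.
Hypothesis Lr : L < rad.
Let q s := (df s - df L) / (s - L).

Lemma qE s : s < L -> q s = (df L - df s) / (L - s).
Proof. by move=> sL; rewrite /q -opprB -[s - L]opprB invrN mulrNN. Qed.

Lemma q_mono s1 s2 : 0 <= s1 -> s1 <= s2 -> s2 < L -> q s1 <= q s2.
Proof.
move=> s10 s12 s2L; rewrite !qE //; last by apply: le_lt_trans s2L.
have [->|ne] := eqVneq s1 s2; first by [].
have s12' : s1 < s2 by rewrite lt_neqAle ne s12.
apply: frac_le; [lra|lra|].
have := conv3 s1 s2 L s10 s12' s2L Lr; lra.
Qed.

Let b := (L + rad) / 2.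

Lemma q_ub s : 0 <= s -> s < L -> q s <= (df b - df L) / (b - L).
Proof.
move=> s0 sL; rewrite qE //.
move: (Lr) => Lr'.
apply: frac_le; [lra|rewrite /b; lra|].
have := conv3 s L b s0 sL (ltac:(rewrite /b; lra) : L < b) ltac:(rewrite /b; lra); lra.
Qed.

Lemma q_cvg : cvg (q x @[x --> L^'-]).
Proof.
apply: nondecreasing_at_left_is_cvgr.
  near=> x => y z; rewrite !in_itv /= => /andP[xy yL] /andP[xz zL] yz.
  apply: q_mono => //; apply: le_trans (ltW xy).
  by near: x; apply: nbhs_left_ge.
near=> x; exists ((df b - df L) / (b - L)) => _ [y /= yx <-].
move: yx; rewrite in_itv /= => /andP[xy yL]; apply: q_ub => //.
apply: le_trans (ltW xy); by near: x; apply: nbhs_left_ge.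
Unshelve. all: by end_near.
Qed.

Lemma q_le_D s : 0 <= s -> s < L -> q s <= left_deriv df L.
Proof.
move=> s0 sL; apply: limr_ge; first exact: q_cvg.
near=> x; apply: q_mono => //.
by apply: ltW; near: x; apply: nbhs_left_gt.
Unshelve. all: by end_near.
Qed.

Lemma chord a c : 0 <= a -> a < c -> c <= L -> df c - df a <= left_deriv df L * (c - a).
Proof.
move=> a0 ac cL.
have D1 := q_le_D a a0 (lt_le_trans ac cL).
have [cLe|cLn] := eqVneq c L.
  rewrite cLe in ac *; rewrite qE // in D1.
  by move: D1; rewrite ler_pdivrMr ?subr_gt0.
have cL' : c < L by rewrite lt_neqAle cLn cL.
have D2 := q_le_D c (ltac:(lra) : 0 <= c) cL'; rewrite qE // in D2.
have H := conv3 a c L a0 ac cL' Lr.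
have H3 : (df c - df a) * (L - c) <= (df L - df c) * (c - a) by lra.
have : (df c - df a) <= (df L - df c) / (L - c) * (c - a).
  by rewrite mulrAC ler_pdivlMr ?subr_gt0.
move/le_trans; apply; rewrite ler_pM2r ?subr_gt0 //.
Qed.

End LD.

End SC.

Lemma diff_eps (R : realType) (V W : normedModType R) (F : V -> W) (z : V) :
  differentiable F z -> forall e : R, 0 < e -> exists2 d : R, 0 < d &
  forall k, `|k| < d -> `|F (z + k) - F z - 'd F z k| <= e * `|k|.
Proof.
move=> dF e e0.
have := diff_locally dF => /eqaddoP /(_ e e0).
move/nbhs_norm0P => [d d0 Hd]; exists d => // k kd.
have := Hd k kd; rewrite !fctE /= (addrC k) opprD addrA //.
Qed.

Lemma ball_interior (R : realType) (V : normedModType R) (C : set V) (x0 z : V) (r : R) :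
  ball x0 r `<=` C -> `|x0 - z| < r -> interior C z.
Proof.
move=> HC zr; rewrite /interior /=.
apply: (filterS HC); apply: open_nbhs_nbhs; split; first exact: ball_open.
by rewrite -ball_normE.
Qed.

Lemma zid1 (V : zmodType) (a c A S T : V) :
 (a - S) - (c - T) - (A - (S - T)) = a - c - A.
Proof.
rewrite !opprB !addrA (addrAC (a - S + T) (-c) S) (addrAC (a - S) T S) subrK.
by rewrite (addrAC (a + T) (-c) (-T)) addrK.
Qed.

Lemma zid2 (V : zmodType) (Fx Fxs A B : V) : Fxs = 0 -> (Fx + A) + (Fxs - Fx - B) = A - B.
Proof. by move=> ->; rewrite sub0r addrA (addrAC Fx A (-Fx)) subrr add0r. Qed.

Theorem lemma3p7 (R : realType) (X Y : completeNormedModType R)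
  (rad : R) (C : set X) (F : X -> Y) (x0 : X) (Finv : Y -> X)
  (f df : R -> R) :
  (* F continuous on C, continuously differentiable on int(C) *)
  {within C, continuous F} ->
  (forall x, interior C x -> differentiable F x) ->
  (forall x, interior C x -> forall eps : R, 0 < eps -> exists2 del : R, 0 < del &
     forall y, interior C y -> `|y - x| < del ->
       forall v : X, `|'d F y v - 'd F x v| <= eps * `|v|) ->
  interior C x0 ->
  (* Finv = F'(x0)^{-1} *)
  cancel ('d F x0) Finv -> cancel Finv ('d F x0) ->
  (* f : [0,rad) -> R continuously differentiable with derivative df *)
  is_derivative_on f df rad ->
  {within `[0, rad[, continuous df} ->
  ball x0 rad `<=` C ->
  (forall x y : X, ball x0 rad x -> ball x0 rad y ->
     `|x - x0| + `|y - x| < rad ->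
     forall v : X, `|Finv ('d F y v - 'd F x v)| <=
       (df (`|y - x| + `|x - x0|) - df `|x - x0|) * `|v|) ->
  `|Finv (F x0)| <= f 0 ->
  (* h1 *) 0 < f 0 -> df 0 = -1 ->
  (* h2 *) {in `[0, rad[ &, {mono df : s t / s < t}} ->
  (forall s t a : R, 0 <= s < rad -> 0 <= t < rad -> 0 <= a <= 1 ->
     df (a * s + (1 - a) * t) <= a * df s + (1 - a) * df t) ->
  (* h3 *) (exists t, 0 < t < rad /\ f t < 0) ->
  forall (theta t : R) (xs x y : X),
  0 <= theta -> 0 <= t <= lambda f df rad ->
  lambda f df rad < rad ->
  `|x - x0| <= t -> `|xs - x| <= lambda f df rad - t -> F xs = 0 ->
  `|Finv (F x + 'd F x (y - x))| <= theta * `|Finv (F x)| ->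
  `|xs - y| <= ((1 + theta) / 2 + 2 * theta / kappa f rad) * `|xs - x| /\
  `|xs - y| <=
    ((1 + theta) / 2 * (left_deriv df (lambda f df rad) / `|df (lambda f df rad)|)
        * `|xs - x|
     + theta * ((2 + df (lambda f df rad)) / `|df (lambda f df rad)|)) * `|xs - x|.
Proof.
move=> Fc Fdiff Fdc x0int ST TS Hderiv Hdfc Hball Hlip Hfx0 Hf0 Hdf0 Hmono Hconv Hh3
  theta t xs x y th0 /andP[t0 tlam] Hlr xx0 xsx Fxs Hres.
have [lam0 dflam] := lambda_facts _ _ _ _ Hderiv Hdf0 Hmono Hf0 Hh3 Hdfc Hlr.
have kap0 := kappa_gt0 _ _ _ _ Hderiv Hdf0 Hmono Hf0 Hh3.
move: tlam Hlr xsx lam0 dflam kap0.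
set lam := lambda f df rad; set kap := kappa f rad => tlam Hlr xsx lam0 dflam kap0.
have dF0 : differentiable F x0 := Fdiff x0 x0int.
have TD a b : 'd F x0 (a + b) = 'd F x0 a + 'd F x0 b by rewrite linearD.
have TZ (k : R) a : 'd F x0 (k *: a) = k *: 'd F x0 a by rewrite linearZ.
have Tc : continuous ('d F x0) := diff_continuous dF0.
have [c c0 Sb] := bounded_inverse _ _ _ _ _ TD TZ Tc TS ST.
have SD a b : Finv (a + b) = Finv a + Finv b by apply: (can_inj ST); rewrite TD !TS.
have SZ (k : R) a : Finv (k *: a) = k *: Finv a by apply: (can_inj ST); rewrite TZ !TS.
have SN a : Finv (- a) = - Finv a by rewrite -scaleN1r SZ scaleN1r.
have SB a b : Finv (a - b) = Finv a - Finv b by rewrite SD SN.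
have S0 : Finv 0 = 0 by rewrite -(subrr (0 : Y)) SB subrr.
have dfl a b : 0 <= a -> a <= b -> b < rad -> df a <= df b := df_le _ _ _ Hmono a b.
move: xx0 xsx; set s := `|x - x0|; set u := `|xs - x|; set d := xs - x => xx0 xsx.
have s0 : 0 <= s by apply: normr_ge0.
have u0 : 0 <= u by apply: normr_ge0.
have su : s + u <= lam by lra.
have sur : s + u < rad by lra.
have ud : `|d| = u by [].
have znorm tq : 0 <= tq <= 1 -> `|x0 - (x + tq *: d)| <= s + tq * u.
  case/andP => tq0 tq1; rewrite opprD addrA.
  by apply: le_trans (ler_normD _ _) _; rewrite normrN normrZ ger0_norm // distrC.
have zball tq : 0 <= tq <= 1 -> `|x0 - (x + tq *: d)| < rad.
  move=> tq01; apply: le_lt_trans (znorm tq tq01) _.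
  case/andP: tq01 => tq0 tq1; nra.
have zdiff tq : 0 <= tq <= 1 -> differentiable F (x + tq *: d).
  by move=> tq01; apply: Fdiff; apply: (ball_interior _ _ _ _ _ _ Hball (zball tq tq01)).
have xball : ball x0 rad x by rewrite -ball_normE /= distrC; rewrite -/s; lra.
have x0ball : ball x0 rad x0 by rewrite -ball_normE /= subrr normr0; lra.
have Hxx0 v : `|Finv ('d F x v - 'd F x0 v)| <= (df s + 1) * `|v|.
  have := Hlip x0 x x0ball xball ltac:(rewrite subrr normr0 add0r -/s; lra) v.
  by rewrite subrr normr0 addr0 Hdf0 -/s opprK.
have Slow v : - df s * `|v| <= `|Finv ('d F x v)|.
  have h : Finv ('d F x v - 'd F x0 v) = Finv ('d F x v) - v by rewrite SB ST.
  have := Hxx0 v; rewrite h => H.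
  have := ler_distD (Finv ('d F x v)) v 0; rewrite !subr0 distrC => H2.
  nra.
have Supp v : `|Finv ('d F x v)| <= (2 + df s) * `|v|.
  have h : Finv ('d F x v - 'd F x0 v) = Finv ('d F x v) - v by rewrite SB ST.
  have := Hxx0 v; rewrite h => H.
  have := ler_distD v (Finv ('d F x v)) 0; rewrite !subr0 => H2.
  nra.
pose phi (r : R) := Finv (F (x + r *: d) - r *: 'd F x d).
pose Dv (r : R) := Finv ('d F (x + r *: d) d - 'd F x d).
have phiE : phi 1 - phi 0 = Finv (F xs - F x - 'd F x d).
  rewrite /phi scale1r !scale0r addr0 subr0 /d (addrC x) subrK -SB.
  by rewrite scale1r addrAC.
have Dvb (K : R) : (forall r, 0 <= r <= 1 -> (df (r * u + s) - df s) * u <= K * r) ->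
    forall r, 0 <= r <= 1 -> `|Dv r| <= K * r.
  move=> HK r r01; apply: le_trans (HK r r01).
  have zb : ball x0 rad (x + r *: d) by rewrite -ball_normE /=; apply: zball.
  have hr : `|x + r *: d - x| = r * u.
    by case/andP: r01 => r0 r1; rewrite (addrC x) addrK normrZ ger0_norm.
  have := Hlip x (x + r *: d) xball zb ltac:(rewrite hr -/s; case/andP: r01 => r0 r1; nra) d.
  by rewrite hr.
have Hd r : 0 <= r <= 1 -> forall e : R, 0 < e -> exists2 del : R, 0 < del &
    forall q, 0 <= q <= 1 -> `|q - r| < del ->
      `|phi q - phi r - (q - r) *: Dv r| <= e * `|q - r|.
  move=> r01 e e0.
  have u10 : 0 < u + 1 by lra.
  have e'0 : 0 < e / (c * (u + 1)) by rewrite divr_gt0 // mulr_gt0.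
  have [del del0 Hdel] := diff_eps _ _ _ _ _ (zdiff r r01) _ e'0.
  exists (del / (u + 1)); first by rewrite divr_gt0.
  move=> q q01 qr.
  set z := x + r *: d; set k := (q - r) *: d.
  have xk : x + q *: d = z + k.
    by rewrite /z /k -addrA -scalerDl; congr (x + _ *: d); ring.
  have kn : `|k| = `|q - r| * u by rewrite /k normrZ.
  have kd : `|k| < del.
    rewrite kn; move: qr; rewrite ltr_pdivlMr // => qr.
    apply: le_lt_trans qr; apply: ler_wpM2l; [exact: normr_ge0 | lra].
  have Hk := Hdel k kd.
  have eq : phi q - phi r - (q - r) *: Dv r = Finv (F (z + k) - F z - 'd F z k).
    have eq0 : (F (z + k) - q *: 'd F x d) - (F z - r *: 'd F x d)
        - (q - r) *: ('d F z d - 'd F x d) = F (z + k) - F z - 'd F z k.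
      have -> : 'd F z k = (q - r) *: 'd F z d by rewrite /k linearZ.
      rewrite (scalerBr (q - r) ('d F z d)) (scalerBl q r ('d F x d)).
      exact: zid1.
    by rewrite /phi /Dv -/z xk -eq0 !SB !SZ !SB.
  rewrite eq; apply: le_trans (Sb _) _.
  apply: le_trans (ler_wpM2l (ltW c0) Hk) _.
  have -> : c * (e / (c * (u + 1)) * `|k|) = e * `|q - r| * (u / (u + 1)).
    by rewrite kn; field; rewrite !gt_eqF.
  have uu : u / (u + 1) <= 1 by rewrite ler_pdivrMr //; lra.
  have : 0 <= e * `|q - r| by rewrite mulr_ge0 // ltW.
  nra.
have dfs : df s <= df lam by apply: dfl => //; lra.
have dfsu : df (s + u) <= df lam by apply: dfl => //; lra.
have dfss : df s <= df (s + u) by apply: dfl => //; lra.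
set e := `|Finv (F xs - F x - 'd F x d)|.
have E1 : e <= (df (s + u) - df s) * u / 2.
  rewrite /e -phiE; apply: (mvi _ _ _ Dv); first by rewrite mulr_ge0 //; lra.
  - apply: Dvb => r /andP[r0 r1].
    have := Hconv (s + u) s r ltac:(apply/andP; split; lra) ltac:(apply/andP; split; lra)
      ltac:(by rewrite r0 r1).
    have -> : r * (s + u) + (1 - r) * s = r * u + s by ring.
    move=> H; nra.
  - exact: Hd.
have E2 : 0 < u -> e <= left_deriv df lam * u ^+ 2 / 2.
  move=> up.
  have lamp : 0 < lam by lra.
  have ch a b : 0 <= a -> a < b -> b <= lam -> df b - df a <= left_deriv df lam * (b - a).
    exact: (chord _ _ _ Hconv lam lamp Hlr a b).
  have D0 : 0 <= left_deriv df lam.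
    have := ch 0 lam (lexx 0) lamp (lexx lam).
    have := dfl 0 lam (lexx 0) lam0 Hlr; nra.
  rewrite /e -phiE; apply: (mvi _ _ _ Dv); first by rewrite mulr_ge0 // sqr_ge0.
  - apply: Dvb => r /andP[r0 r1].
    have [->|rn0] := eqVneq r 0; first by rewrite !mul0r add0r subrr mul0r mulr0.
    have rp : 0 < r by rewrite lt_neqAle eq_sym rn0 r0.
    have := ch s (r * u + s) s0 ltac:(nra) ltac:(nra).
    move=> H; nra.
  - exact: Hd.
have Hr : 'd F x (y - xs) = (F x + 'd F x (y - x)) + (F xs - F x - 'd F x d).
  by rewrite (zid2 _ _ _ _ _ Fxs) /d -linearB opprB addrA subrK.
have Hcore : - df s * `|y - xs| <= `|Finv (F x + 'd F x (y - x))| + e.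
  have := Slow (y - xs); rewrite Hr SD => H; apply: le_trans H (ler_normD _ _).
have HFx : `|Finv (F x)| <= e + (2 + df s) * u.
  have -> : F x = - ((F xs - F x - 'd F x d) + 'd F x d) by rewrite subrK Fxs sub0r opprK.
  rewrite SN normrN SD; apply: le_trans (ler_normD _ _) _; rewrite lerD2l; exact: Supp d.
have Hmain : - df s * `|xs - y| <= (1 + theta) * e + theta * ((2 + df s) * u).
  rewrite distrC.
  have := ler_wpM2l th0 HFx => H2.
  lra.
clear Hd Dvb phiE phi Dv Hcore HFx Hr Slow Supp Hxx0 Hlip Fdc Fc Hres zdiff zball znorm.
clear Sb SD SZ SN SB S0 TD TZ Tc ST TS Fdiff x0int Hball Hfx0.
move: Hmain; set A := `|xs - y|; set a := - df s => Hmain.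
have A0 : 0 <= A by apply: normr_ge0.
have e0 : 0 <= e by apply: normr_ge0.
have ak : kap <= a by rewrite /a; lra.
have a0 : 0 < a by lra.
have Hmain' : a * A <= (1 + theta) * e + theta * ((2 - a) * u) by rewrite /a opprK.
split.
  have e1 : e <= a * u / 2.
    apply: le_trans E1 _; rewrite ler_pM2r // ler_wpM2r //; rewrite /a; lra.
  have e1' : (1 + theta) * e <= (1 + theta) * (a * u / 2) by rewrite ler_wpM2l //; lra.
  have ak1 : 1 <= a / kap by rewrite ler_pdivlMr // mul1r.
  have tu : 0 <= theta * u by rewrite mulr_ge0.
  have h2 : 2 * (theta * u) <= 2 * (theta * u) * (a / kap).
    by rewrite -{1}(mulr1 (2 * (theta * u))) ler_wpM2l // mulr_ge0.
  have eqR : a * (((1 + theta) / 2 + 2 * theta / kap) * u) =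
      (1 + theta) * (a * u / 2) + 2 * (theta * u) * (a / kap).
    by field; rewrite gt_eqF.
  rewrite -(ler_pM2l a0) eqR.
  have : theta * ((2 - a) * u) <= 2 * (theta * u) by nra.
  lra.
have [u0'|up] := eqVneq u 0.
  rewrite u0' !mulr0.
  have : e <= 0 by move: E1; rewrite u0' !mulr0 mul0r.
  move=> ele; rewrite u0' !mulr0 addr0 in Hmain'.
  have : a * A <= 0 by nra.
  rewrite pmulr_rle0 //.
have upos : 0 < u by rewrite lt_neqAle eq_sym up u0.
have e2 := E2 upos.
have lamp : 0 < lam by lra.
have D0 : 0 <= left_deriv df lam.
  have := chord _ _ _ Hconv lam lamp Hlr 0 lam (lexx 0) lamp (lexx lam).
  have := dfl 0 lam (lexx 0) lam0 Hlr; nra.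
move: e2 D0; set D := left_deriv df lam => e2 D0.
have dfl0 : df lam < 0 by lra.
rewrite (ltr0_norm dfl0).
set b := - df lam.
have b0 : 0 < b by rewrite /b; lra.
have ba : b <= a by rewrite /b /a; lra.
have g1 : 1 <= a / b by rewrite ler_pdivlMr // mul1r.
have hb : df lam = - b by rewrite /b opprK.
rewrite hb.
have eqR : a * (((1 + theta) / 2 * (D / b) * u + theta * ((2 + - b) / b)) * u) =
    (1 + theta) / 2 * (D * u ^+ 2) * (a / b) + theta * u * (2 * (a / b) - a).
  by field; rewrite gt_eqF.
rewrite -(ler_pM2l a0) eqR.
have P0 : 0 <= (1 + theta) / 2 * (D * u ^+ 2) by rewrite !mulr_ge0 // ?sqr_ge0 //; lra.
have h1 : (1 + theta) / 2 * (D * u ^+ 2) <= (1 + theta) / 2 * (D * u ^+ 2) * (a / b).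
  by rewrite -{1}(mulr1 ((1 + theta) / 2 * (D * u ^+ 2))) ler_wpM2l.
have tu : 0 <= theta * u by rewrite mulr_ge0.
have h2 : theta * u * (2 - a) <= theta * u * (2 * (a / b) - a) by rewrite ler_wpM2l //; lra.
have e2' : (1 + theta) * e <= (1 + theta) * (D * u ^+ 2 / 2) by rewrite ler_wpM2l //; lra.
nra.
Qed.
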